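(* Let $\varphi$ be a bounded, increasing, submodular setfunction on a sigma-algebra $(J,\mathcal{B})$, continuous from above, with $\varphi(\emptyset)=0$. Let $(\mathcal{P}_n\colon n\in\mathbb{N})$ be a refining sequence of partitions of $J$, each into finitely many sets of $\mathcal{B}$, such that $\bigcup_n\mathcal{P}_n$ generates $\mathcal{B}$. Then $\varphi/\mathcal{P}_n\rightarrowtail\varphi$.
   Context: $\varphi$ is increasing if $X\subseteq Y$ implies $\varphi(X)\le\varphi(Y)$, submodular if $\varphi(X)+\varphi(Y)\ge\varphi(X\cap Y)+\varphi(X\cup Y)$, and continuous from above if $\varphi(\bigcap_nX_n)=\lim_n\varphi(X_n)$ for every decreasing sequence $X_1\supseteq X_2\supseteq\dots$ in $\mathcal{B}$. A sequence of partitions is refining if $\mathcal{P}_{n+1}$ refines $\mathcal{P}_n$. For a finite partition $\mathcal{P}$ of $J$ into sets of $\mathcal{B}$, the quotient $\varphi/\mathcal{P}$ is the setfunction on subsets $\mathcal{S}\subseteq\mathcal{P}$ given by $\mathcal{S}\mapsto\varphi(\bigcup\mathcal{S})$. More generally, for a setfunction $\psi$ on a set-algebra $(I,\mathcal{C})$ and a map $F\colon I\to[k]$ with $F^{-1}(i)\in\mathcal{C}$, the quotient $\psi\circ F^{-1}$ is $A\mapsto\psi(F^{-1}(A))$ on $2^{[k]}$, and $Q_k(\psi)\subseteq\mathbb{R}^{2^k}$ is the set of all such quotients. $\psi_n\rightarrowtail\psi$ means that for every $k\in\mathbb{N}$ the Hausdorff distance in Euclidean $\mathbb{R}^{2^k}$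 between $Q_k(\psi_n)$ and $Q_k(\psi)$ tends to $0$. *)

(* Defs.v *)
From HB Require Import structures.
From mathcomp Require Import all_boot all_order all_algebra.
From mathcomp Require Import all_classical all_reals all_analysis.
Set Implicit Arguments. Unset Strict Implicit. Unset Printing Implicit Defensive.
Import Order.TTheory GRing.Theory Num.Theory.
Local Open Scope classical_set_scope.
Local Open Scope ring_scope.

Section Defs.
Variable R : realType.

(* Vectors in R^{2^k}: coordinates indexed by the subsets of [k] = 'I_k. *)
Definition vec2k (k : nat) := {ffun {set 'I_k} -> R}.

Definition eucl_dist (k : nat) (v w : vec2k k) : R :=
  Num.sqrt (\sum_(A : {set 'I_k}) (v A - w A) ^+ 2).

(* Directed Hausdorff deviation sup_{x in X} inf_{y in Y} d(x,y), in \bar R;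
   the extra 0 only fixes the convention for X empty (distances are >= 0). *)
Definition hdev (k : nat) (X Y : set (vec2k k)) : \bar R :=
  ereal_sup ([set 0%E] `|`
    [set ereal_inf [set (eucl_dist x y)%:E | y in Y] | x in X]).

Definition hausdorff (k : nat) (X Y : set (vec2k k)) : \bar R :=
  maxe (hdev X Y) (hdev Y X).

Definition Qk (I : Type) (C : set (set I)) (psi : set I -> R) (k : nat)
  : set (vec2k k) :=
  [set v | exists F : I -> 'I_k,
     (forall i : 'I_k, C (F @^-1` [set i])) /\
     (forall A : {set 'I_k}, v A = psi [set x | F x \in A])].

Definition quot_part (J : Type) (phi : set J -> R) (m : nat)
  (P : 'I_m -> set J) : set 'I_m -> R :=
  fun S => phi (\bigcup_(i in S) P i).

End Defs.

Arguments Qk {R I} C psi k _.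
Arguments quot_part {R J} phi {m} P _.
Arguments hausdorff {R k} X Y.

(* Main.v *)
Require Import Defs.
From HB Require Import structures.
From mathcomp Require Import all_boot all_order all_algebra.
From mathcomp Require Import all_classical all_reals all_analysis.
From mathcomp Require Import lra ring.
Import Order.TTheory GRing.Theory Num.Theory numFieldNormedType.Exports.
Local Open Scope classical_set_scope.
Local Open Scope ring_scope.
Set Implicit Arguments. Unset Strict Implicit.

Lemma sa_U T (B : set (set T)) : sigma_algebra setT B ->
  forall X Y, B X -> B Y -> B (X `|` Y).
Proof.
case=> B0 BC BU X Y bX bY.
have -> : X `|` Y = \bigcup_k (if k == 0%N then X else Y).
  rewrite eqEsubset; split => x.
    by case=> h; [exists 0%N | exists 1%N].
  by case=> -[|k] _ /= h; [left|right].
by apply: BU => -[|k].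
Qed.

Lemma sa_C T (B : set (set T)) : sigma_algebra setT B ->
  forall X, B X -> B (~` X).
Proof. by case=> B0 BC BU X bX; rewrite -setTD; apply: BC. Qed.

Lemma sa_I T (B : set (set T)) : sigma_algebra setT B ->
  forall X Y, B X -> B Y -> B (X `&` Y).
Proof.
move=> hB X Y bX bY; rewrite -[X `&` Y]setCK setCI.
by apply: sa_C => //; apply: sa_U => //; apply: sa_C.
Qed.

Lemma sa_D T (B : set (set T)) : sigma_algebra setT B ->
  forall X Y, B X -> B Y -> B (X `\` Y).
Proof. by move=> hB X Y bX bY; apply: sa_I => //; apply: sa_C. Qed.

Definition sd {T : Type} (X Y : set T) : set T := (X `\` Y) `|` (Y `\` X).

Lemma sa_sd T (B : set (set T)) : sigma_algebra setT B ->
  forall X Y, B X -> B Y -> B (sd X Y).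
Proof. by move=> hB X Y bX bY; apply: sa_U => //; apply: sa_D. Qed.

Lemma sa_pre T k (B : set (set T)) : sigma_algebra setT B ->
  forall f : T -> 'I_k, (forall i, B (f @^-1` [set i])) ->
  forall S : pred 'I_k, B [set x | S (f x)].
Proof.
case=> B0 BC BU f hf S.
have -> : [set x | S (f x)] = \bigcup_n (match insub n with
   Some i => if S i then f @^-1` [set i] else set0 | None => set0 end).
  rewrite eqEsubset; split => x /=.
    move=> Sx; exists (val (f x)) => //; rewrite valK Sx //.
  case=> n _; case: insubP => [i _ ni|_] //; case: ifP => // Si /= ->//.
apply: BU => n; case: insubP => [i _ _|_] //; case: ifP => //.
Qed.

Lemma phi_ge0 (R : realType) J (B : set (set J)) (phi : set J -> R) :
  sigma_algebra setT B ->
  (forall X Y, B X -> B Y -> X `<=` Y -> phi X <= phi Y) ->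
  phi set0 = 0 -> forall X, B X -> 0 <= phi X.
Proof.
move=> hB mono p0 X bX; rewrite -p0; apply: mono => //; by case: hB.
Qed.

Lemma phi_subadd (R : realType) J (B : set (set J)) (phi : set J -> R) :
  sigma_algebra setT B ->
  (forall X Y, B X -> B Y -> X `<=` Y -> phi X <= phi Y) ->
  (forall X Y, B X -> B Y -> phi X + phi Y >= phi (X `&` Y) + phi (X `|` Y)) ->
  phi set0 = 0 -> forall X Y, B X -> B Y -> phi (X `|` Y) <= phi X + phi Y.
Proof.
move=> hB mono sub p0 X Y bX bY.
have h0 := phi_ge0 hB mono p0 (sa_I hB bX bY).
have := sub X Y bX bY; lra.
Qed.

Lemma phi_sd (R : realType) J (B : set (set J)) (phi : set J -> R) :
  sigma_algebra setT B ->
  (forall X Y, B X -> B Y -> X `<=` Y -> phi X <= phi Y) ->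
  (forall X Y, B X -> B Y -> phi X + phi Y >= phi (X `&` Y) + phi (X `|` Y)) ->
  phi set0 = 0 -> forall X Y, B X -> B Y -> `|phi X - phi Y| <= phi (sd X Y).
Proof.
move=> hB mono sub p0 X Y bX bY.
have bs := sa_sd hB bX bY.
have h1 : phi X <= phi Y + phi (sd X Y).
  apply: le_trans (phi_subadd hB mono sub p0 bY bs).
  apply: mono => //; first exact: sa_U.
  move=> x Xx; have [Yx|nYx] := pselect (Y x); first by left.
  by right; left.
have h2 : phi Y <= phi X + phi (sd X Y).
  apply: le_trans (phi_subadd hB mono sub p0 bX bs).
  apply: mono => //; first exact: sa_U.
  move=> x Yx; have [Xx|nXx] := pselect (X x); first by left.
  by right; right.
rewrite ler_norml; apply/andP; split; lra.
Qed.

Lemma phi_bigU (R : realType) J (B : set (set J)) (phi : set J -> R) :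
  sigma_algebra setT B ->
  (forall X Y, B X -> B Y -> X `<=` Y -> phi X <= phi Y) ->
  (forall X Y, B X -> B Y -> phi X + phi Y >= phi (X `&` Y) + phi (X `|` Y)) ->
  phi set0 = 0 -> forall (I : eqType) (s : seq I) (D : I -> set J),
  (forall i, B (D i)) ->
  B [set x | exists2 i, i \in s & D i x] /\
  phi [set x | exists2 i, i \in s & D i x] <= \sum_(i <- s) phi (D i).
Proof.
move=> hB mono sub p0 I s D bD; elim: s => [|i s [IH1 IH2]].
  have -> : [set x | exists2 i, i \in [::] & D i x] = set0.
    by rewrite eqEsubset; split => x // [].
  by rewrite big_nil p0; split => //; case: hB.
have -> : [set x | exists2 j, j \in i :: s & D j x] =
    D i `|` [set x | exists2 j, j \in s & D j x].
  rewrite eqEsubset; split => x.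
    by case=> j; rewrite in_cons => /orP[/eqP->|js] Dx; [left|right; exists j].
  by case=> [Dx|[j js Dx]]; [exists i; rewrite ?mem_head | exists j; rewrite ?in_cons ?js ?orbT].
split; first exact: sa_U.
rewrite big_cons; apply: le_trans (phi_subadd hB mono sub p0 (bD i) IH1) _.
by rewrite lerD2l.
Qed.

Ltac btauto := have ? : is_true true by []; have ? : ~ is_true false by []; tauto.

Definition bset J (m : nat -> nat) (blk : forall n, J -> 'I_(m n)) n
  (S : pred 'I_(m n)) : set J := [set x | S (blk n x)].

Lemma refine_le J (m : nat -> nat) (blk : forall n, J -> 'I_(m n)) :
  (forall n, exists g : 'I_(m n.+1) -> 'I_(m n), forall x, blk n x = g (blk n.+1 x)) ->
  forall n n', (n <= n')%N -> exists g : 'I_(m n') -> 'I_(m n),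
    forall x, blk n x = g (blk n' x).
Proof.
move=> href n; elim=> [|n' IH].
  rewrite leqn0 => /eqP <-; by exists id.
rewrite leq_eqVlt => /orP[/eqP <-|]; first by exists id.
rewrite ltnS => /IH [g hg]; have [g' hg'] := href n'.
by exists (g \o g') => x /=; rewrite hg hg'.
Qed.

Lemma bset_lift J (m : nat -> nat) (blk : forall n, J -> 'I_(m n)) :
  (forall n, exists g : 'I_(m n.+1) -> 'I_(m n), forall x, blk n x = g (blk n.+1 x)) ->
  forall n n', (n <= n')%N -> forall S : pred 'I_(m n),
  exists S' : pred 'I_(m n'), bset blk S = bset blk S'.
Proof.
move=> href n n' le S; have [g hg] := refine_le href le.
exists (fun j => S (g j)); rewrite /bset eqEsubset; split => x /=; by rewrite hg.
Qed.

Definition papprox (R : realType) J (m : nat -> nat) (blk : forall n, J -> 'I_(m n))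
  (phi : set J -> R) (X : set J) :=
  forall e, 0 < e -> exists n, forall n', (n <= n')%N ->
    exists S : pred 'I_(m n'), phi (sd X (bset blk S)) <= e.

Lemma B_bset J (B : set (set J)) (m : nat -> nat) (blk : forall n, J -> 'I_(m n)) :
  sigma_algebra setT B -> (forall n i, B (blk n @^-1` [set i])) ->
  forall n (S : pred 'I_(m n)), B (bset blk S).
Proof. by move=> hB hblk n S; apply: (sa_pre hB (hblk n)). Qed.

Lemma sdxx T (X : set T) : sd X X = set0.
Proof. by rewrite /sd setDv setU0. Qed.

Lemma approx_blk (R : realType) J (m : nat -> nat) (blk : forall n, J -> 'I_(m n))
  (phi : set J -> R) :
  (forall n, exists g : 'I_(m n.+1) -> 'I_(m n), forall x, blk n x = g (blk n.+1 x)) ->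
  phi set0 = 0 -> forall n i, papprox blk phi (blk n @^-1` [set i]).
Proof.
move=> href p0 n i e e0; exists n => n' le.
have [S' hS'] := bset_lift href le (pred1 i).
exists S'; rewrite -hS'.
have -> : blk n @^-1` [set i] = bset blk (pred1 i).
  by rewrite /bset eqEsubset; split => x /=; move/eqP.
by rewrite sdxx p0 ltW.
Qed.

Lemma approx_C (R : realType) J (m : nat -> nat) (blk : forall n, J -> 'I_(m n))
  (phi : set J -> R) X : papprox blk phi X -> papprox blk phi (~` X).
Proof.
move=> aX e e0; have [n hn] := aX e e0; exists n => n' le.
have [S hS] := hn n' le; exists (predC S).
suff -> : sd (~` X) (bset blk (predC S)) = sd X (bset blk S) by [].
rewrite /sd /bset eqEsubset; split => x /=;
  have [Xx|nXx] := pselect (X x); case: (S (blk n' x)) => /=; btauto.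
Qed.

Lemma approx_U (R : realType) J (B : set (set J)) (m : nat -> nat)
  (blk : forall n, J -> 'I_(m n)) (phi : set J -> R) :
  sigma_algebra setT B -> (forall n i, B (blk n @^-1` [set i])) ->
  (forall X Y, B X -> B Y -> X `<=` Y -> phi X <= phi Y) ->
  (forall X Y, B X -> B Y -> phi X + phi Y >= phi (X `&` Y) + phi (X `|` Y)) ->
  phi set0 = 0 ->
  forall X Y, B X -> B Y -> papprox blk phi X -> papprox blk phi Y ->
  papprox blk phi (X `|` Y).
Proof.
move=> hB hblk mono sub p0 X Y bX bY aX aY e e0.
have e2 : 0 < e / 2 by rewrite divr_gt0.
have [n1 h1] := aX _ e2; have [n2 h2] := aY _ e2.
exists (maxn n1 n2) => n' le.
have [S1 hS1] := h1 n' (leq_trans (leq_maxl _ _) le).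
have [S2 hS2] := h2 n' (leq_trans (leq_maxr _ _) le).
exists (predU S1 S2).
have bb := B_bset hB hblk.
have b1 := sa_sd hB bX (bb _ S1); have b2 := sa_sd hB bY (bb _ S2).
apply: le_trans (_ : phi (sd X (bset blk S1) `|` sd Y (bset blk S2)) <= _).
  apply: mono; [apply: sa_sd => //; exact: sa_U | exact: sa_U|].
  rewrite /sd /bset => x /=.
  have [Xx|nXx] := pselect (X x); have [Yx|nYx] := pselect (Y x);
  case: (S1 (blk n' x)); case: (S2 (blk n' x)) => /=; btauto.
apply: le_trans (phi_subadd hB mono sub p0 b1 b2) _.
have -> : e = e / 2 + e / 2 by field.
exact: lerD.
Qed.

Lemma approx_bigU (R : realType) J (B : set (set J)) (m : nat -> nat)
  (blk : forall n, J -> 'I_(m n)) (phi : set J -> R) :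
  sigma_algebra setT B -> (forall n i, B (blk n @^-1` [set i])) ->
  (forall n, exists g : 'I_(m n.+1) -> 'I_(m n), forall x, blk n x = g (blk n.+1 x)) ->
  (forall X Y, B X -> B Y -> X `<=` Y -> phi X <= phi Y) ->
  (forall X Y, B X -> B Y -> phi X + phi Y >= phi (X `&` Y) + phi (X `|` Y)) ->
  (forall X : nat -> set J, (forall n, B (X n)) ->
     (forall n, X n.+1 `<=` X n) ->
     (fun n => phi (X n)) @ \oo --> phi (\bigcap_n X n)) ->
  phi set0 = 0 ->
  forall A : nat -> set J, (forall k, B (A k)) -> (forall k, papprox blk phi (A k)) ->
  papprox blk phi (\bigcup_k A k).
Proof.
move=> hB hblk href mono sub cont p0 A bA aA.
pose Y i := [set x | exists j, (j < i)%N /\ A j x].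
have Y0 : Y 0%N = set0 by rewrite eqEsubset; split => x // [j []].
have YS i : Y i.+1 = Y i `|` A i.
  rewrite eqEsubset; split => x.
    case=> j []; rewrite ltnS leq_eqVlt => /orP[/eqP->|ji] Ax; [by right|].
    by left; exists j.
  by case=> [[j [ji Ax]]|Ax]; [exists j; split => //; exact: ltnW|exists i].
have bY i : B (Y i).
  elim: i => [|i IH]; first by rewrite Y0; case: hB.
  by rewrite YS; apply: sa_U.
have aY i : papprox blk phi (Y i).
  elim: i => [|i IH].
    rewrite Y0 => e e0; exists 0%N => n' _; exists pred0.
    suff -> : sd set0 (bset blk (pred0 : pred 'I_(m n'))) = set0 by rewrite p0 ltW.
    by rewrite eqEsubset; split => x // [[]|[]].
  by rewrite YS; apply: (approx_U hB hblk mono sub p0).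
set X := \bigcup_k A k.
have bX : B X by case: hB => _ _; apply.
have YX i : Y i `<=` X by move=> x [j [_ Ax]]; exists j.
have bZ i : B (X `\` Y i) by apply: sa_D.
have Zdec i : X `\` Y i.+1 `<=` X `\` Y i.
  by move=> x [Xx nY]; split => // Yx; apply: nY; rewrite YS; left.
have Zcap : \bigcap_i (X `\` Y i) = set0.
  rewrite eqEsubset; split => x // hx.
  have [Xx _] := hx 0%N I; case: Xx => j _ Ajx.
  have [_] := hx j.+1 I; apply; exists j; split => //.
have cv := cont _ bZ Zdec; rewrite Zcap p0 in cv.
move=> e e0; have e2 : 0 < e / 2 by rewrite divr_gt0.
have [N _ HN] := cvgr_dist_le _ _ cv _ e2.
have hN := HN N (leqnn N); rewrite sub0r normrN in hN.
have hN' : phi (X `\` Y N) <= e / 2 by apply: le_trans hN; exact: ler_norm.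
have [n hn] := aY N _ e2; exists n => n' le; have [S hS] := hn n' le; exists S.
have bb := B_bset hB hblk.
apply: le_trans (_ : phi ((X `\` Y N) `|` sd (Y N) (bset blk S)) <= _).
  apply: mono; [apply: sa_sd => //| apply: sa_U => //; exact: sa_sd|].
  move=> x; have := YX N x; rewrite /sd /bset /=.
  have [Xx|nXx] := pselect (X x); have [Yx|nYx] := pselect (Y N x);
  case: (S (blk n' x)) => /=; btauto.
apply: le_trans (phi_subadd hB mono sub p0 (bZ N) (sa_sd hB (bY N) (bb _ S))) _.
have -> : e = e / 2 + e / 2 by field.
exact: lerD.
Qed.

Lemma B_approx (R : realType) J (B : set (set J)) (m : nat -> nat)
  (blk : forall n, J -> 'I_(m n)) (phi : set J -> R) :
  sigma_algebra setT B -> (forall n i, B (blk n @^-1` [set i])) ->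
  (forall n, exists g : 'I_(m n.+1) -> 'I_(m n), forall x, blk n x = g (blk n.+1 x)) ->
  B `<=` <<s [set A | exists n i, A = blk n @^-1` [set i]] >> ->
  (forall X Y, B X -> B Y -> X `<=` Y -> phi X <= phi Y) ->
  (forall X Y, B X -> B Y -> phi X + phi Y >= phi (X `&` Y) + phi (X `|` Y)) ->
  (forall X : nat -> set J, (forall n, B (X n)) ->
     (forall n, X n.+1 `<=` X n) ->
     (fun n => phi (X n)) @ \oo --> phi (\bigcap_n X n)) ->
  phi set0 = 0 ->
  forall X, B X -> papprox blk phi X.
Proof.
move=> hB hblk href gen mono sub cont p0.
pose L := [set X | B X /\ papprox blk phi X].
have hL : sigma_algebra setT L.
  split.
  - split; first by case: hB.
    move=> e e0; exists 0%N => n' _; exists pred0.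
    suff -> : sd set0 (bset blk (pred0 : pred 'I_(m n'))) = set0 by rewrite p0 ltW.
    by rewrite eqEsubset; split => x // [[]|[]].
  - move=> A [bA aA]; rewrite setTD; split; first exact: sa_C.
    exact: approx_C.
  - move=> A hA; split; first by case: hB => _ _; apply => n; case: (hA n).
    apply: (approx_bigU hB hblk href mono sub cont p0).
      by move=> k; case: (hA k).
    by move=> k; case: (hA k).
have sL : <<s [set A | exists n i, A = blk n @^-1` [set i]] >> `<=` L.
  apply: smallest_sub => // A [n [i ->]]; split => //.
  exact: approx_blk.
by move=> X /gen /sL [].
Qed.

Lemma approx_lab (R : realType) J (B : set (set J)) (m : nat -> nat)
  (blk : forall n, J -> 'I_(m n)) (phi : set J -> R) (pt : forall n, 'I_(m n) -> J) :
  sigma_algebra setT B -> (forall n i, B (blk n @^-1` [set i])) ->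
  (forall X Y, B X -> B Y -> X `<=` Y -> phi X <= phi Y) ->
  (forall X Y, B X -> B Y -> phi X + phi Y >= phi (X `&` Y) + phi (X `|` Y)) ->
  phi set0 = 0 ->
  (forall X, B X -> papprox blk phi X) ->
  forall k (G : J -> 'I_k), (forall i, B (G @^-1` [set i])) ->
  forall e, 0 < e -> exists n, forall n', (n <= n')%N ->
  exists F : 'I_(m n') -> 'I_k, forall A : {set 'I_k},
    `|phi [set x | G x \in A] - phi [set x | F (blk n' x) \in A]| <= e.
Proof.
move=> hB hblk mono sub p0 aB k G bG e e0.
have k0 : 0 <= k%:R :> R by [].
pose e' := e / (k%:R + 1).
have e'0 : 0 < e' by rewrite divr_gt0 // ltr_wpDl.
have [nf hnf] := choice (fun j : 'I_k => aB _ (bG j) e' e'0).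
exists (\max_(j : 'I_k) nf j) => n' le.
have [Sf hSf] := choice (fun j : 'I_k => hnf j n' (leq_trans (leq_bigmax (F:=nf) j) le)).
pose D := [set x | exists2 j, j \in enum 'I_k & sd (G @^-1` [set j]) (bset blk (Sf j)) x].
have bb := B_bset hB hblk.
have [bD pD] := phi_bigU hB mono sub p0 (enum 'I_k)
  (fun j => sa_sd hB (bG j) (bb _ (Sf j))).
have pDe : phi D <= e.
  apply: le_trans pD _.
  apply: le_trans (_ : \sum_(j <- enum 'I_k) e' <= _).
    by apply: ler_sum => j _; apply: hSf.
  rewrite big_enum /= sumr_const card_ord -mulr_natl /e'.
  rewrite mulrA ler_pdivrMr ?ltr_wpDl //; nra.
pose F (b : 'I_(m n')) := if [pick j | Sf j b] is Some j then j else G (pt n' b).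
exists F => A.
have FG x : ~ D x -> F (blk n' x) = G x.
  move=> nD.
  have hj j : (G x = j) <-> Sf j (blk n' x).
    split => [Gx|Sx]; apply: contrapT => h; apply: nD; exists j; rewrite ?mem_enum //.
      by left.
    by right.
  rewrite /F; case: pickP => [j Sj|none]; first by apply/esym/hj.
  by have := none (G x); have -> := (proj1 (hj (G x)) erefl).
have bGA : B [set x | G x \in A] by exact: (sa_pre hB bG (fun j => j \in A)).
have bFA : B [set x | F (blk n' x) \in A] by exact: (bb _ (fun b => F b \in A)).
apply: le_trans (phi_sd hB mono sub p0 bGA bFA) _.
apply: le_trans pDe; apply: mono => //; first exact: sa_sd.
move=> x; have [Dx|nDx] := pselect (D x) => //.
by rewrite /sd /= (FG x nDx) => -[[]|[]].
Qed.

Lemma cell_close (R : realType) (M d a b : R) : 0 < d -> 0 <= a <= M -> 0 <= b <= M ->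
  (inord (Num.Def.trunc (a / d)) : 'I_(Num.Def.trunc (M / d)).+1) = inord (Num.Def.trunc (b / d)) ->
  `|a - b| <= d.
Proof.
move=> d0 /andP[a0 aM] /andP[b0 bM] h.
have ad : 0 <= a / d by rewrite divr_ge0 // ltW.
have bd : 0 <= b / d by rewrite divr_ge0 // ltW.
have aM' : (Num.Def.trunc (a / d) < (Num.Def.trunc (M / d)).+1)%N.
  by rewrite ltnS le_truncn // ler_pM2r ?invr_gt0.
have bM' : (Num.Def.trunc (b / d) < (Num.Def.trunc (M / d)).+1)%N.
  by rewrite ltnS le_truncn // ler_pM2r ?invr_gt0.
have e : Num.Def.trunc (a / d) = Num.Def.trunc (b / d).
  by have := congr1 val h; rewrite /= !inordK.
have /andP[a1 a2] := trunc_itv ad; have /andP[b1 b2] := trunc_itv bd.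
rewrite e in a1 a2.
have -> : a - b = (a / d - b / d) * d by field; rewrite gt_eqF.
rewrite normrM (gtr0_norm d0) ler_piMl ?(ltW d0) //.
rewrite ler_norml; apply/andP; split.
- move: b2 a1; rewrite -natr1; lra.
- move: a2 b1; rewrite -natr1; lra.
Qed.

Lemma uniform (R : realType) J (B : set (set J)) (m : nat -> nat)
  (blk : forall n, J -> 'I_(m n)) (phi : set J -> R) (pt : forall n, 'I_(m n) -> J)
  (M : R) :
  sigma_algebra setT B -> (forall n i, B (blk n @^-1` [set i])) ->
  (forall X Y, B X -> B Y -> X `<=` Y -> phi X <= phi Y) ->
  (forall X Y, B X -> B Y -> phi X + phi Y >= phi (X `&` Y) + phi (X `|` Y)) ->
  phi set0 = 0 ->
  (forall X, B X -> papprox blk phi X) ->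
  (forall X, B X -> phi X <= M) ->
  forall k eta, 0 < eta -> exists N, forall n', (N <= n')%N ->
  forall G : J -> 'I_k, (forall i, B (G @^-1` [set i])) ->
  exists F : 'I_(m n') -> 'I_k, forall A : {set 'I_k},
    `|phi [set x | G x \in A] - phi [set x | F (blk n' x) \in A]| <= eta.
Proof.
move=> hB hblk mono sub p0 aB hM k eta eta0.
pose d := eta / 2; have d0 : 0 < d by rewrite divr_gt0.
pose L := Num.Def.trunc (M / d).
pose cell (G : J -> 'I_k) : {ffun {set 'I_k} -> 'I_L.+1} :=
  [ffun A : {set 'I_k} => inord (Num.Def.trunc (phi [set x | G x \in A] / d))].
have hc : forall c, exists n, forall n', (n <= n')%N ->
    forall G : J -> 'I_k, (forall i, B (G @^-1` [set i])) -> cell G = c ->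
    exists F : 'I_(m n') -> 'I_k, forall A : {set 'I_k},
    `|phi [set x | G x \in A] - phi [set x | F (blk n' x) \in A]| <= eta.
  move=> c.
  have [[G0 [mG0 cG0]]|none] :=
    pselect (exists G0 : J -> 'I_k, (forall i, B (G0 @^-1` [set i])) /\ cell G0 = c).
    have [n hn] := approx_lab pt hB hblk mono sub p0 aB mG0 d0.
    exists n => n' le G mG cG; have [F hF] := hn n' le; exists F => A.
    have bG : B [set x | G x \in A] by exact: (sa_pre hB mG (fun j => j \in A)).
    have bG0 : B [set x | G0 x \in A] by exact: (sa_pre hB mG0 (fun j => j \in A)).
    have close : `|phi [set x | G x \in A] - phi [set x | G0 x \in A]| <= d.
      apply: (@cell_close R M) => //.
      - by rewrite (phi_ge0 hB mono p0 bG) hM.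
      - by rewrite (phi_ge0 hB mono p0 bG0) hM.
      - have h := etrans cG (esym cG0).
        by have := congr1 (fun f : {ffun {set 'I_k} -> 'I_L.+1} => f A) h; rewrite !ffunE.
    apply: le_trans (ler_distD (phi [set x | G0 x \in A]) _ _) _.
    have -> : eta = d + d by rewrite /d; field.
    exact: lerD.
  by exists 0%N => n' _ G mG cG; exfalso; apply: none; exists G.
have [nc hnc] := choice hc; exists (\max_c nc c) => n' le G mG.
exact: (hnc (cell G) n' (leq_trans (leq_bigmax (F:=nc) (cell G)) le) G mG erefl).
Qed.

Lemma cvge0 (R : realType) (u : nat -> \bar R) :
  (forall e : R, 0 < e -> exists N, forall n, (N <= n)%N ->
     (0 <= u n)%E /\ (u n <= e%:E)%E) -> u @ \oo --> 0%E.
Proof.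
move=> H; apply/fine_cvgP; split.
  have [N hN] := H 1 ltr01; exists N => // n le.
  have [a b] := hN n le; rewrite ge0_fin_numE //.
  exact: le_lt_trans b (ltey _).
apply/cvgrPdist_le => e e0; have [N hN] := H e e0; exists N => // n le.
rewrite /=; move: (hN n le); case: (u n) => [r||] /=; rewrite ?lee_fin ?leey ?leNye // => -[r0 re].
  by rewrite sub0r normrN ger0_norm.
all: by rewrite subrr normr0 ltW.
Qed.

Lemma hdev_ge0 (R : realType) k (X Y : set (vec2k R k)) : (0 <= hdev X Y)%E.
Proof. by apply: ereal_sup_ubound; left. Qed.

Lemma hdev_le (R : realType) k (X Y : set (vec2k R k)) (e : R) : 0 <= e ->
  (forall x, X x -> exists2 y, Y y & eucl_dist x y <= e) -> (hdev X Y <= e%:E)%E.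
Proof.
move=> e0 H; apply: ge_ereal_sup => z [->|[x Xx <-]]; first by rewrite lee_fin.
have [y Yy d] := H x Xx; apply: ge_ereal_inf; exists (eucl_dist x y)%:E.
  by exists y.
by rewrite lee_fin.
Qed.

Lemma dist_self (R : realType) k (x : vec2k R k) : eucl_dist x x = 0.
Proof.
rewrite /eucl_dist big1 ?sqrtr0 // => A _; by rewrite subrr expr0n.
Qed.
Unset Implicit Arguments. Set Strict Implicit.

Theorem theorem4p3 (R : realType) (J : Type) (B : set (set J))
  (phi : set J -> R) (m : nat -> nat) (P : forall n : nat, 'I_(m n) -> set J) :
  (* each P n is a partition of J into finitely many nonempty sets of B *)
  (forall n (i : 'I_(m n)), B (P n i)) ->
  (forall n (i : 'I_(m n)), P n i !=set0) ->
  (forall n (i j : 'I_(m n)), i != j -> P n i `&` P n j = set0) ->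
  (forall n, \bigcup_(i in [set: 'I_(m n)]) P n i = [set: J]) ->
  (* refining *)
  (forall n (j : 'I_(m n.+1)), exists i : 'I_(m n), P n.+1 j `<=` P n i) ->
  (* the union of the partitions generates the sigma-algebra B *)
  B = <<s [set A | exists n (i : 'I_(m n)), A = P n i] >> ->
  (* phi bounded, increasing, submodular, continuous from above, phi(0) = 0 *)
  (exists M : R, forall X, B X -> `|phi X| <= M) ->
  (forall X Y, B X -> B Y -> X `<=` Y -> phi X <= phi Y) ->
  (forall X Y, B X -> B Y -> phi X + phi Y >= phi (X `&` Y) + phi (X `|` Y)) ->
  (forall X : nat -> set J, (forall n, B (X n)) ->
     (forall n, X n.+1 `<=` X n) ->
     (fun n => phi (X n)) @ \oo --> phi (\bigcap_n X n)) ->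
  phi set0 = 0 ->
  (* conclusion: phi / P_n  >->  phi *)
  forall k : nat,
    (fun n => hausdorff (Qk [set: set 'I_(m n)] (quot_part phi (P n)) k)
                        (Qk B phi k)) @ \oo --> 0%E.
Proof.
Proof.
move=> BP Pne Pdisj Pcov Pref Bgen [M hM] mono sub cont p0 k.
have hB : sigma_algebra setT B by rewrite Bgen; exact: smallest_sigma_algebra.
have cov n x : exists i, P n i x.
  by have : [set: J] x by []; rewrite -(Pcov n) => -[i _ Px]; exists i.
pose blk n x := proj1_sig (cid (cov n x)).
have blkP n x : P n (blk n x) x := proj2_sig (cid (cov n x)).
have Peq n i : P n i = blk n @^-1` [set i].
  rewrite eqEsubset; split => x /=; last by move=> <-.
  move=> Px; case: (eqVneq (blk n x) i) => // ne.
  have := Pdisj n _ _ ne; rewrite eqEsubset => -[h _].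
  by case: (h x (conj (blkP n x) Px)).
have hblk n i : B (blk n @^-1` [set i]) by rewrite -Peq.
have href n : exists g : 'I_(m n.+1) -> 'I_(m n), forall x, blk n x = g (blk n.+1 x).
  have [g hg] := choice (Pref n); exists g => x.
  by have := hg _ x (blkP n.+1 x); rewrite Peq.
have gen : B `<=` <<s [set A | exists n i, A = blk n @^-1` [set i]] >>.
  rewrite {1}Bgen; apply: sub_sigma_algebra2 => A [n [i ->]].
  by exists n, i; exact: Peq.
pose pt n i := proj1_sig (cid (Pne n i)).
have hM' X : B X -> phi X <= M by move=> bX; exact: le_trans (ler_norm _) (hM X bX).
have aB := B_approx hB hblk href gen mono sub cont p0.
have hU := uniform pt hB hblk mono sub p0 aB hM' k.
have qp n (F : 'I_(m n) -> 'I_k) (A : {set 'I_k}) :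
    quot_part phi (P n) [set i | F i \in A] = phi [set x | F (blk n x) \in A].
  rewrite /quot_part; congr phi; rewrite eqEsubset; split => x.
    by case=> i /= Fi; rewrite Peq /= => ->.
  by move=> /= h; exists (blk n x).
apply: cvge0 => e e0.
pose c := #|{set 'I_k}|%:R : R.
have c1 : 1 <= c by rewrite /c ler1n; apply/card_gt0P; exists (finset.set0 : {set 'I_k}).
pose eta := e / c.
have eta0 : 0 < eta by rewrite divr_gt0 // (lt_le_trans ltr01 c1).
have [N hN] := hU eta eta0.
exists N => n le; split.
  by rewrite /hausdorff le_max hdev_ge0.
rewrite /hausdorff ge_max; apply/andP; split; apply: hdev_le (ltW e0) _.
  move=> x [F [_ hx]]; exists x; last by rewrite dist_self ltW.
  exists (fun z => F (blk n z)); split.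
    move=> i.
    have -> : (fun z => F (blk n z)) @^-1` [set i] = [set z | (fun b => F b == i) (blk n z)].
      by rewrite eqEsubset; split => z /= /eqP.
    exact: (sa_pre hB (hblk n) (fun b => F b == i)).
  by move=> A; rewrite hx qp.
move=> y [G [mG hy]]; have [F hF] := hN n le G mG.
exists [ffun A : {set 'I_k} => phi [set z | F (blk n z) \in A]].
  by exists F; split => // A; rewrite ffunE qp.
rewrite /eucl_dist.
apply: le_trans (_ : Num.sqrt (e ^+ 2) <= _); last first.
  by rewrite sqrtr_sqr ger0_norm // ltW.
rewrite ler_sqrt ?sqr_ge0 //.
apply: le_trans (_ : \sum_(A : {set 'I_k}) eta ^+ 2 <= _).
  apply: ler_sum => A _; rewrite hy ffunE; have := hF A.
  set d := _ - _; rewrite ler_norml => /andP[h1 h2]; nra.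
rewrite sumr_const -mulr_natl -/c.
have -> : c * eta ^+ 2 = e ^+ 2 / c.
  by rewrite /eta; field; rewrite gt_eqF // (lt_le_trans ltr01 c1).
rewrite ler_pdivrMr ?(lt_le_trans ltr01 c1) //.
have : 0 <= e ^+ 2 by rewrite sqr_ge0.
nra.
Qed.
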